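(* Let $v$ be an additive valuation with nonnegative item values shared by $n$ agents, and items $g_1,\dots,g_T$ on a line. For $t\in[T]$ let $B_t=\frac1n v(M_t)-\frac{n-1}{n}\max_{g\in M_t}v(g)$ and $B_t^{\max}=\max_{s\in[t]}B_s$. Then for every $t\in[T]$ there exists a contiguous allocation $A$ of $M_t$ with $\min_{i\in[n]}v(A_i)\ge B^{\max}_t$; letting $X^t$ be the one among these whose vector $\ell(A)=(\ell(A_1),\dots,\ell(A_{n-1}))$ is lexicographically minimum, we have $\ell(X^t_i)\le \ell(X^{t+1}_i)$ for all $t<T$ and $i<n$.
   Context: $M_t=\{g_1,\dots,g_t\}$, $M_{l,r}=\{g_{l+1},\dots,g_r\}$. A contiguous allocation of $M_t$ is $(A_1,\dots,A_n)$ with $A_i=M_{p_{i-1},p_i}$ for some $0=p_0\le p_1\le\dots\le p_{n-1}\le p_n=t$; $\ell(A_i)=p_i$ denotes the index of the last item of block $i$ (with the convention that it equals $p_i$ even if the block is empty). It is a known result (Suksompong) that for additive valuations on a line there always exists a contiguous allocation with $v(A_i)\ge\frac1n v(M)-\frac{n-1}{n}\max_{g\in M}v(g)$ for all $i$. *)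

(* Defs.v *)
From mathcomp Require Import all_boot all_order all_algebra.
Set Implicit Arguments. Unset Strict Implicit. Unset Printing Implicit Defensive.
Import Order.TTheory GRing.Theory Num.Theory.
Local Open Scope ring_scope.

(* Items g_1..g_T are indexed by 1..T; [v k] is the value of item g_k.
   M_{l,r} = {g_(l+1),...,g_r}. *)
Definition valM {R : realFieldType} (v : nat -> R) (l r : nat) : R :=
  \sum_(l <= k < r) v k.+1.

(* max_{g in M_t} v(g)  (t >= 1 and values nonnegative, so base 0 is harmless) *)
Definition maxM {R : realFieldType} (v : nat -> R) (t : nat) : R :=
  \big[Num.max/0]_(0 <= k < t) v k.+1.

Definition Bt {R : realFieldType} (n : nat) (v : nat -> R) (t : nat) : R :=
  valM v 0 t / n%:R - (n.-1)%:R / n%:R * maxM v t.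

Definition Bmax {R : realFieldType} (n : nat) (v : nat -> R) (t : nat) : R :=
  \big[Num.max/Bt n v 1]_(1 <= s < t.+1) Bt n v s.

(* A contiguous allocation of M_t to n agents is given by its vector of
   end indices c = (l(A_1),...,l(A_{n-1})); the full boundary list is
   p = 0 :: c ++ [:: t]  (p_0 = 0, p_n = t), and A_i = M_{p_{i-1}, p_i}. *)
Definition bounds (t : nat) (c : seq nat) : seq nat := 0%N :: rcons c t.

Definition is_contig (n t : nat) (c : seq nat) : bool :=
  (size c == n.-1) && sorted leq (bounds t c).

(* value of block i (0-indexed, i < n), i.e. v(A_{i+1}) *)
Definition blockval {R : realFieldType} (v : nat -> R) (t : nat) (c : seq nat)
  (i : nat) : R :=
  valM v (nth 0%N (bounds t c) i) (nth 0%N (bounds t c) i.+1).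

Definition good {R : realFieldType} (n : nat) (v : nat -> R) (t : nat)
  (c : seq nat) : Prop :=
  is_contig n t c /\ (forall i, (i < n)%N -> Bmax n v t <= blockval v t c i).

Fixpoint lex_le (s1 s2 : seq nat) : bool :=
  match s1, s2 with
  | [::], _ => true
  | _ :: _, [::] => false
  | x :: s1', y :: s2' => (x < y)%N || ((x == y) && lex_le s1' s2')
  end.

Definition lexmin_good {R : realFieldType} (n : nat) (v : nat -> R) (t : nat)
  (c : seq nat) : Prop :=
  good n v t c /\ (forall d, good n v t d -> lex_le c d).

(* Main.v *)
From Pilot Require Import Defs.
From mathcomp Require Import all_boot all_order all_algebra.
From mathcomp Require Import zify ring lra.
Import Order.TTheory GRing.Theory Num.Theory.
Local Open Scope ring_scope.

Local Notation VM := Pilot.Defs.valM.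

Lemma bigmax_x0 {R : realFieldType} (F : nat -> R) x0 l k :
  x0 <= \big[Num.max/x0]_(l <= j < l + k) F j.
Proof.
elim: k l => [|k IH] l; first by rewrite addn0 big_geq.
rewrite big_ltn; last by rewrite addnS ltnS leq_addr.
by rewrite le_max -addSnnS IH orbT.
Qed.

Lemma bigmax_F {R : realFieldType} (F : nat -> R) x0 l h j :
  (l <= j < h)%N -> F j <= \big[Num.max/x0]_(l <= i < h) F i.
Proof.
move=> /andP[lj jh].
have [k hk] : exists k, h = (l + k)%N by exists (h - l)%N; lia.
move: jh; rewrite hk; clear hk.
elim: k l lj => [|k IH] l lj jh; first lia.
rewrite big_ltn; last lia.
case: (ltnP l j) => hlj.
  by rewrite le_max -addSnnS IH ?orbT //; lia.
have -> : j = l by lia.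
by rewrite le_max lexx.
Qed.

Lemma bigmax_le {R : realFieldType} (F : nat -> R) x0 l h y :
  x0 <= y -> (forall j, (l <= j < h)%N -> F j <= y) ->
  \big[Num.max/x0]_(l <= i < h) F i <= y.
Proof.
move=> hx hF; rewrite big_seq_cond.
apply: (big_ind (fun x => x <= y)) => //.
  by move=> a b ha hb; rewrite ge_max ha hb.
by move=> i /andP[]; rewrite mem_index_iota => /hF.
Qed.

Lemma bigmax_in {R : realFieldType} (F : nat -> R) x0 l h :
  \big[Num.max/x0]_(l <= i < h) F i = x0 \/
  exists j, (l <= j < h)%N /\ \big[Num.max/x0]_(l <= i < h) F i = F j.
Proof.
rewrite big_seq_cond.
apply: (big_ind (fun x => x = x0 \/ exists j, (l <= j < h)%N /\ x = F j)).
- by left.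
- move=> a b ha hb; case/orP: (le_total a b) => hab.
    by rewrite max_r.
  by rewrite max_l.
- by move=> i /andP[]; rewrite mem_index_iota => hi _; right; exists i.
Qed.

Section S.
Variable R : realFieldType.
Variable T : nat.
Variable v : nat -> R.
Hypothesis hv : forall k, (1 <= k <= T)%N -> 0 <= v k.

Lemma valM_ge0 l r : (r <= T)%N -> 0 <= VM v l r.
Proof.
move=> rT; rewrite /Defs.valM big_nat_cond; apply: sumr_ge0 => k /andP[/andP[lk kr] _].
apply: hv; apply/andP; split; lia.
Qed.

Lemma valM_split {l m r} : (l <= m)%N -> (m <= r)%N ->
  VM v l r = VM v l m + VM v m r.
Proof. by move=> h1 h2; rewrite /Defs.valM (big_cat_nat h1 h2). Qed.

Lemma valM_mono {l l' r' r} : (l <= l')%N -> (l' <= r')%N -> (r' <= r)%N ->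
  (r <= T)%N -> VM v l' r' <= VM v l r.
Proof.
move=> h1 h2 h3 h4.
rewrite (valM_split h1 (leq_trans h2 h3)) (valM_split h2 h3).
have := valM_ge0 l l' (leq_trans (leq_trans h2 h3) h4).
have := valM_ge0 r' r h4.
lra.
Qed.

Lemma valMnn l : VM v l l = 0.
Proof. by rewrite /Defs.valM big_geq. Qed.

Lemma split_exists k l B m : 0 <= B + m ->
  (forall j, (l < j <= l + k)%N -> v j <= m) ->
  B <= VM v l (l + k) ->
  exists p, (l <= p <= l + k)%N /\ B <= VM v l p /\ VM v l p <= B + m.
Proof.
move=> hBm; elim: k => [|k IH] hm hB.
  by exists l; rewrite addn0 in hB *; rewrite valMnn in hB *; rewrite leqnn.
have e : VM v l (l + k.+1) = VM v l (l + k) + v (l + k).+1.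
  by rewrite /Defs.valM addnS big_nat_recr //= leq_addr.
case: (lerP B (VM v l (l + k))) => h.
  have [|p [hp hp2]] := IH _ h.
    by move=> j hj; apply: hm; lia.
  by exists p; split => //; lia.
exists (l + k.+1)%N; split; first lia.
split => //; rewrite e.
have : v (l + k).+1 <= m by apply: hm; lia.
lra.
Qed.

Lemma alloc n : forall l r r' B m, 0 < B -> 0 <= m ->
  (l <= r)%N -> (r <= r')%N -> (r' <= T)%N ->
  (forall j, (l < j <= r)%N -> v j <= m) ->
  n.+1%:R * B + n%:R * m <= VM v l r ->
  exists c : seq nat, size c = n /\ sorted leq (l :: rcons c r') /\
   forall i, (i < n.+1)%N ->
     B <= VM v (nth 0%N (l :: rcons c r') i) (nth 0%N (l :: rcons c r') i.+1).
Proof.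
elim: n => [|n IH] l r r' B m hB hm hlr hrr hrT hv' hV.
  exists [::]; split => //; split; first by rewrite /= andbT (leq_trans hlr hrr).
  case=> // _ /=.
  apply: le_trans (valM_mono (leqnn l) hlr hrr hrT).
  by move: hV; rewrite mul1r mul0r addr0.
have [p [hp [hp1 hp2]]] : exists p, (l <= p <= l + (r - l))%N /\
   B <= VM v l p /\ VM v l p <= B + m.
  apply: split_exists; first lra.
    by move=> j hj; apply: hv'; lia.
  rewrite subnKC //.
  have := valM_ge0 l r (leq_trans hrr hrT).
  have : 0 <= n.+1%:R * B + n.+1%:R * m.
    by apply: addr_ge0; apply: mulr_ge0; rewrite ?ler0n // ltW.
  move: hV; rewrite -[n.+2]addn1 natrD mulrDl mul1r; lra.
have hpr : (p <= r)%N by lia.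
have hrem : n.+1%:R * B + n%:R * m <= VM v p r.
  rewrite (valM_split (m:=p)) // in hV; last lia.
  move: hV; rewrite -[n.+2]addn1 natrD mulrDl mul1r.
  rewrite -[n.+1]addn1 natrD mulrDl mul1r.
  lra.
have hv2 : forall j, (p < j <= r)%N -> v j <= m by move=> j hj; apply: hv'; lia.
have [c [hs [hso hb]]] := IH p r r' B m hB hm hpr hrr hrT hv2 hrem.
exists (p :: c); split; first by rewrite /= hs.
split; first by move: hso => /= ->; rewrite andbT; lia.
case=> [|i] hi; first by [].
exact: hb.
Qed.

Lemma alloc0 n : forall l r', (l <= r')%N -> (r' <= T)%N ->
  exists c : seq nat, size c = n /\ sorted leq (l :: rcons c r') /\
   forall i, (i < n.+1)%N ->
     0 <= VM v (nth 0%N (l :: rcons c r') i) (nth 0%N (l :: rcons c r') i.+1).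
Proof.
elim: n => [|n IH] l r' h1 h2.
  exists [::]; split => //; split; first by rewrite /= h1.
  by case=> // _ /=; apply: valM_ge0.
have [c [hs [hso hb]]] := IH l r' h1 h2.
exists (l :: c); split; first by rewrite /= hs.
split; first by move: hso => /= ->; rewrite leqnn.
case=> [|i] hi; first by rewrite /= valMnn.
exact: hb.
Qed.

End S.

Lemma maxM_ge {R : realFieldType} (v : nat -> R) k s :
  (0 < k <= s)%N -> v k <= maxM v s.
Proof.
move=> hk; rewrite /maxM.
have -> : k = (k.-1).+1 by lia.
by have := @bigmax_F R (fun j => v j.+1) 0 0%N s k.-1; apply; lia.
Qed.

Lemma maxM_ge0 {R : realFieldType} (v : nat -> R) s : 0 <= maxM v s.
Proof. by have := bigmax_x0 (fun j => v j.+1) 0 0%N s; rewrite add0n. Qed.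

Lemma Bmax_attained {R : realFieldType} n (v : nat -> R) t :
  (1 <= t)%N -> exists s, (1 <= s <= t)%N /\ Bmax n v t = Bt n v s.
Proof.
move=> ht; rewrite /Bmax.
case: (bigmax_in (Bt n v) (Bt n v 1) 1 t.+1) => [->|[j [hj ->]]].
  by exists 1%N; rewrite leqnn ht.
by exists j; split => //; lia.
Qed.

Lemma Bmax_mono {R : realFieldType} n (v : nat -> R) t :
  Bmax n v t <= Bmax n v t.+1.
Proof.
rewrite {1}/Bmax; apply: bigmax_le.
  by have := bigmax_x0 (Bt n v) (Bt n v 1) 1 t.+1; rewrite add1n.
by move=> j hj; apply: bigmax_F; lia.
Qed.

Lemma lex_eq (c e : seq nat) : size c = size e ->
  (forall j, (nth 0 e j <= nth 0 c j)%N) -> lex_le c e -> c = e.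
Proof.
elim: c e => [|x c IH] [|y e] //= [hs] hp /orP[h|/andP[/eqP hxy hl]].
  by have := hp 0%N => /=; lia.
rewrite hxy (IH e) // => j; exact: (hp j.+1).
Qed.

Lemma nth_bounds t c j :
  nth 0%N (bounds t c) j.+1 =
  if (j < size c)%N then nth 0%N c j else if j == size c then t else 0%N.
Proof. by rewrite /bounds /= nth_rcons. Qed.

Theorem mainTheorem2 (R : realFieldType) (n T : nat) (v : nat -> R)
  (hn : (0 < n)%N)
  (hv : forall k, (1 <= k <= T)%N -> 0 <= v k) :
  (forall t, (1 <= t <= T)%N -> exists c, good n v t c) /\
  (forall t, (1 <= t < T)%N -> forall c d : seq nat,
     lexmin_good n v t c -> lexmin_good n v t.+1 d ->
     forall i, (i < n.-1)%N -> (nth 0 c i <= nth 0 d i)%N).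
Proof.
case: n hn => // n _.
split.
  move=> t /andP[ht1 htT].
  have [s [hs hBe]] := Bmax_attained n.+1 v t ht1.
  case: (lerP (Bt n.+1 v s) 0) => hB.
    have [c [hc [hso hb]]] := @alloc0 R T v hv n 0%N t (leq0n t) htT.
    exists c; split; first by rewrite /is_contig hc eqxx.
    by move=> i hi; rewrite hBe; apply: le_trans hB (hb i hi).
  have hst : (s <= t)%N by lia.
  have hm : forall j, (0 < j <= s)%N -> v j <= maxM v s.
    by move=> j hj; apply: maxM_ge.
  have hV : n.+1%:R * Bt n.+1 v s + n%:R * maxM v s <= VM v 0 s.
    rewrite le_eqVlt; apply/orP; left; apply/eqP; rewrite /Bt /=; field.
    by rewrite addrC natr1 pnatr_eq0.
  have [c [hc [hso hb]]] := @alloc R T v hv n 0%N s t (Bt n.+1 v s) (maxM v s) hB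
     (maxM_ge0 v s) (leq0n s) hst htT hm hV.
  exists c; split; first by rewrite /is_contig hc eqxx.
  by move=> i hi; rewrite hBe; apply: hb.
move=> t /andP[ht1 htT] c d [[hcc hcb] hcmin] [[hdc hdb] _] i hi.
move: hcc hdc => /andP[/eqP hsc hcs] /andP[/eqP hsd hds].
rewrite /= in hi hsc hsd.
set e := mkseq (fun j => minn (nth 0%N c j) (nth 0%N d j)) n.
have hse : size e = n by rewrite size_mkseq.
have key : forall j, (j < n.+2)%N -> nth 0%N (bounds t e) j =
    minn (nth 0%N (bounds t c) j) (nth 0%N (bounds t.+1 d) j).
  case=> [|j] hj; first by [].
  rewrite !nth_bounds hse hsc hsd.
  case: (ltnP j n) => hjn; first by rewrite nth_mkseq.
  case: eqP => _ //; lia.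
have szc : size (bounds t c) = n.+2 by rewrite /bounds /= size_rcons hsc.
have szd : size (bounds t.+1 d) = n.+2 by rewrite /bounds /= size_rcons hsd.
have sze : size (bounds t e) = n.+2 by rewrite /bounds /= size_rcons hse.
have lastc : nth 0%N (bounds t c) n.+1 = t by rewrite nth_bounds hsc ltnn eqxx.
have lastd : nth 0%N (bounds t.+1 d) n.+1 = t.+1 by rewrite nth_bounds hsd ltnn eqxx.
have bndc : forall j, (j < n.+2)%N -> (nth 0%N (bounds t c) j <= t)%N.
  move=> j hj; rewrite -{2}lastc.
  apply: (sorted_leq_nth leq_trans leqnn 0%N hcs); rewrite ?inE ?szc //; lia.
have bndd : forall j, (j < n.+2)%N -> (nth 0%N (bounds t.+1 d) j <= t.+1)%N.
  move=> j hj; rewrite -{2}lastd.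
  apply: (sorted_leq_nth leq_trans leqnn 0%N hds); rewrite ?inE ?szd //; lia.
have hcs' := elimT (@sortedP _ _ _ 0%N) hcs.
have hds' := elimT (@sortedP _ _ _ 0%N) hds.
have hge : good n.+1 v t e.
  split.
    apply/andP; split; first by rewrite hse.
    apply/(@sortedP _ _ _ 0%N) => j hj.
    rewrite sze in hj; rewrite !key //; last lia.
    have := hcs' j ltac:(rewrite szc //); have := hds' j ltac:(rewrite szd //).
    lia.
  move=> j hj; rewrite /blockval !key //; last lia.
  set a0 := nth 0%N (bounds t c) j; set a1 := nth 0%N (bounds t c) j.+1.
  set b0 := nth 0%N (bounds t.+1 d) j; set b1 := nth 0%N (bounds t.+1 d) j.+1.
  have ha : (a0 <= a1)%N by apply: hcs'; rewrite szc.
  have hb : (b0 <= b1)%N by apply: hds'; rewrite szd.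
  have ha1 : (a1 <= t)%N by apply: bndc.
  have hb1 : (b1 <= t.+1)%N by apply: bndd.
  case: (leqP a1 b1) => hab.
    apply: le_trans (hcb j hj) _.
    apply: (@valM_mono R T v hv); lia.
  apply: le_trans (Bmax_mono n.+1 v t) _.
  apply: le_trans (hdb j hj) _.
  apply: (@valM_mono R T v hv); lia.
have hce : c = e.
  apply: lex_eq; [by rewrite hsc hse | | exact: hcmin].
  move=> j; case: (ltnP j n) => hj.
    by rewrite nth_mkseq // geq_minl.
  by rewrite nth_default ?hse.
by rewrite hce nth_mkseq // geq_minr.
Qed.
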